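(* Let $R_e\approx1.4877$ be the unique positive root of $\frac{10}{7(R+1)}-\frac{R^2\sqrt{R}}{R^2+R+1}=0$, and let $\tau_k>0$ be time steps with ratios $r_k=\tau_k/\tau_{k-1}\in(0,R_e)$ for all $k\ge2$. Then for every $n\ge3$ and every nonzero vector $(\xi_3,\dots,\xi_n)$ of reals, $$2\sum_{k=3}^n\xi_k\sum_{j=3}^k\tau_k\vartheta^{(k)}_{k-j}\xi_j>0 .$$
   Context: For $x,y\ge0$: $d_0(x,y)=\frac{1+2x}{1+x}+\frac{xy}{1+y+xy}$, $d_1(x,y)=-\frac{x}{1+x}-\frac{xy}{1+y+xy}-\frac{xy^2}{1+y+xy}\frac{1+x}{1+y}$, $d_2(x,y)=\frac{xy^2}{1+y+xy}\frac{1+x}{1+y}$. BDF3 kernels: $d^{(n)}_j=d_j(r_n,r_{n-1})$ for $j=0,1,2$, $d^{(n)}_j=0$ for $j\ge3$. The discrete orthogonal convolution (DOC) kernels are defined recursively for each fixed $n\ge3$ by $\vartheta^{(n)}_0=1/d^{(n)}_0$ and $\vartheta^{(n)}_{n-j}=-\frac{1}{d^{(j)}_0}\sum_{i=j+1}^n\vartheta^{(n)}_{n-i}d^{(i)}_{i-j}$ for $3\le j\le n-1$. *)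

(* Defs.v *)
From HB Require Import structures.
From mathcomp Require Import all_boot all_order all_algebra.
From mathcomp Require Import reals.
Set Implicit Arguments. Unset Strict Implicit. Unset Printing Implicit Defensive.
Import Order.TTheory GRing.Theory Num.Theory.
Local Open Scope ring_scope.

Section BDF3.
Variable R : realType.

Definition Re_eq (x : R) : R :=
  10 / (7 * (x + 1)) - x ^+ 2 * Num.sqrt x / (x ^+ 2 + x + 1).

Definition d0 (x y : R) : R := (1 + 2 * x) / (1 + x) + x * y / (1 + y + x * y).
Definition d1 (x y : R) : R :=
  - (x / (1 + x)) - x * y / (1 + y + x * y)
  - x * y ^+ 2 / (1 + y + x * y) * ((1 + x) / (1 + y)).
Definition d2 (x y : R) : R := x * y ^+ 2 / (1 + y + x * y) * ((1 + x) / (1 + y)).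

Variable tau : nat -> R.

Definition stepratio (k : nat) : R := tau k / tau k.-1.

Definition dker (n j : nat) : R :=
  match j with
  | 0 => d0 (stepratio n) (stepratio n.-1)
  | 1 => d1 (stepratio n) (stepratio n.-1)
  | 2 => d2 (stepratio n) (stepratio n.-1)
  | _ => 0
  end.

(* thseq n m = [:: theta^{(n)}_0; ...; theta^{(n)}_m], built by the recursion
   theta^{(n)}_0 = 1/d^{(n)}_0,
   theta^{(n)}_{n-j} = -1/d^{(j)}_0 * sum_{i=j+1}^n theta^{(n)}_{n-i} d^{(i)}_{i-j}. *)
Fixpoint thseq (n m : nat) : seq R :=
  match m with
  | 0 => [:: 1 / dker n 0]
  | m'.+1 =>
      let s := thseq n m' in
      let j := (n - m)%N in
      rcons s (- (1 / dker j 0) *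
               \sum_(j.+1 <= i < n.+1) nth 0 s (n - i) * dker i (i - j))
  end.

(* DOC kernel theta^{(n)}_m (meaningful for 0 <= m <= n-3) *)
Definition theta (n m : nat) : R := nth 0 (thseq n m) m.

End BDF3.

(* Main.v *)
Require Import Defs.
From HB Require Import structures.
From mathcomp Require Import all_boot all_order all_algebra.
From mathcomp Require Import reals.
From mathcomp Require Import ring lra zify.
Import Order.TTheory GRing.Theory Num.Theory.
Local Open Scope ring_scope.

Section Loc.
Variable R : realType.
Definition Npoly (x y : R) : R := 14 + (5*10+6) * y^+1 + (8*10+4) * y^+2 + (5*10+6) * y^+3 + 14 * y^+4 + (12*10+4) * x^+1 + ((6*10+6)*10+4) * x^+1 * y^+1 + ((12*10+4)*10+8) * x^+1 * y^+2 + ((10*10)*10) * x^+1 * y^+3 + ((2*10+9)*10+2) * x^+1 * y^+4 + (10*10+6) * x^+2 + ((9*10+9)*10+2) * x^+2 * y^+1 + (((2*10+4)*10+3)*10+4) * x^+2 * y^+2 + (((2*10+3)*10+1)*10+6) * x^+2 * y^+3 + ((7*10+6)*10+8) * x^+2 * y^+4 - (10*10+4) * x^+3 - (18*10+4) * x^+3 * y^+1 + ((3*10+3)*10+6) * x^+3 * y^+2 + ((8*10+4)*10+8) * x^+3 * y^+3 + ((2*10+3)*10+2) * x^+3 * y^+4 - ((3*10+6)*10+8) * x^+4 * y^+1 - ((11*10+5)*10+8) * x^+4 * y^+2 - ((9*10+9)*10+2) * x^+4 * y^+3 - ((9*10)*10+2) * x^+4 * y^+4 - ((3*10+2)*10+4)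 * x^+5 * y^+2 - ((3*10+2)*10+8) * x^+5 * y^+3 - ((8*10)*10+4) * x^+5 * y^+4 + (14*10) * x^+6 * y^+3 - (6*10) * x^+6 * y^+4 + (20*10) * x^+7 * y^+4 + (10*10) * x^+8 * y^+4.

Lemma Npos (x y : R) : 0 <= x -> x <= 3/2 -> 0 <= y -> y <= 3/2 -> 0 <= Npoly x y.
Proof.
move=> x0 x1 y0 y1.
have hx : 0 <= 3 - 2*x by lra.
have hy : 0 <= 3 - 2*y by lra.
have E : (((((5*10+3)*10+1)*10+4)*10+4)*10+1) * Npoly x y = 14 * (x^+0 * (3 - 2*x)^+8 * (y^+0 * (3 - 2*y)^+4)) + ((2*10+8)*10) * (x^+0 * (3 - 2*x)^+8 * (y^+1 * (3 - 2*y)^+3)) + (((2*10+1)*10)*10) * (x^+0 * (3 - 2*x)^+8 * (y^+2 * (3 - 2*y)^+2)) + (((7*10)*10)*10) * (x^+0 * (3 - 2*x)^+8 * (y^+3 * (3 - 2*y)^+1)) + (((8*10+7)*10+5)*10) * (x^+0 * (3 - 2*x)^+8 * (y^+4 * (3 - 2*y)^+0)) + ((5*10+9)*10+6) * (x^+1 * (3 - 2*x)^+7 * (y^+0 * (3 - 2*y)^+4)) + (((13*10+4)*10+3)*10+2) * (x^+1 * (3 - 2*x)^+7 * (y^+1 * (3 - 2*y)^+3)) + ((((11*10+2)*10)*10+8)*10) * (x^+1 * (3 - 2*x)^+7 * (y^+2 * (3 - 2*y)^+2)) + (((((4*10+1)*10+1)*10+4)*10)*10) * (x^+1 * (3 -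 2*x)^+7 * (y^+3 * (3 - 2*y)^+1)) + (((((5*10+6)*10+1)*10+5)*10)*10) * (x^+1 * (3 - 2*x)^+7 * (y^+4 * (3 - 2*y)^+0)) + (((7*10+7)*10+3)*10) * (x^+2 * (3 - 2*x)^+6 * (y^+0 * (3 - 2*y)^+4)) + ((((19*10+1)*10+1)*10)*10+4) * (x^+2 * (3 - 2*x)^+6 * (y^+1 * (3 - 2*y)^+3)) + (((((17*10+1)*10+4)*10+6)*10+7)*10+4) * (x^+2 * (3 - 2*x)^+6 * (y^+2 * (3 - 2*y)^+2)) + ((((((6*10+6)*10+7)*10+8)*10+9)*10+4)*10) * (x^+2 * (3 - 2*x)^+6 * (y^+3 * (3 - 2*y)^+1)) + ((((((9*10+5)*10+8)*10+4)*10+6)*10)*10) * (x^+2 * (3 - 2*x)^+6 * (y^+4 * (3 - 2*y)^+0)) + ((((4*10+6)*10+1)*10+6)*10) * (x^+3 * (3 - 2*x)^+5 * (y^+0 * (3 - 2*y)^+4)) + (((((12*10+5)*10+3)*10)*10+3)*10+2) * (x^+3 * (3 - 2*x)^+5 * (y^+1 * (3 - 2*y)^+3)) + ((((((12*10)*10+2)*10+7)*10)*10)*10) * (x^+3 * (3 - 2*x)^+5 * (y^+2 * (3 - 2*y)^+2)) + (((((((4*10+9)*10+4)*10)*10+1)*10+7)*10+6)*10) * (x^+3 * (3 - 2*x)^+5 * (y^+3 * (3 - 2*y)^+1)) + (((((((7*10+3)*10+6)*10+7)*10+5)*10+4)*10)*10) * (x^+3 * (3 - 2*x)^+5 * (y^+4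 * (3 - 2*y)^+0)) + ((((14*10+9)*10)*10)*10) * (x^+4 * (3 - 2*x)^+4 * (y^+0 * (3 - 2*y)^+4)) + ((((((4*10+4)*10+2)*10+2)*10)*10+1)*10+6) * (x^+4 * (3 - 2*x)^+4 * (y^+1 * (3 - 2*y)^+3)) + (((((((4*10+5)*10)*10+3)*10+9)*10+2)*10+3)*10+4) * (x^+4 * (3 - 2*x)^+4 * (y^+2 * (3 - 2*y)^+2)) + (((((((19*10+4)*10)*10+1)*10+3)*10+8)*10+8)*10) * (x^+4 * (3 - 2*x)^+4 * (y^+3 * (3 - 2*y)^+1)) + ((((((((2*10+9)*10+4)*10+7)*10+4)*10+8)*10+8)*10+5)*10) * (x^+4 * (3 - 2*x)^+4 * (y^+4 * (3 - 2*y)^+0)) + (((((2*10+7)*10+3)*10+7)*10+2)*10+8) * (x^+5 * (3 - 2*x)^+3 * (y^+0 * (3 - 2*y)^+4)) + ((((((8*10+8)*10+1)*10+1)*10+3)*10+2)*10+8) * (x^+5 * (3 - 2*x)^+3 * (y^+1 * (3 - 2*y)^+3)) + (((((((9*10+3)*10+8)*10+7)*10+1)*10+5)*10+2)*10+4) * (x^+5 * (3 - 2*x)^+3 * (y^+2 * (3 - 2*y)^+2)) + ((((((((4*10+2)*10+1)*10+8)*10+4)*10+4)*10+6)*10+8)*10) * (x^+5 * (3 - 2*x)^+3 * (y^+3 * (3 - 2*y)^+1)) + ((((((((6*10+2)*10+2)*10+7)*10+8)*10+7)*10+3)*10)*10) * (x^+5 * (3 - 2*x)^+3 * (y^+4 *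 (3 - 2*y)^+0)) + (((((2*10+7)*10+9)*10+3)*10+9)*10+2) * (x^+6 * (3 - 2*x)^+2 * (y^+0 * (3 - 2*y)^+4)) + ((((((9*10+6)*10+4)*10+1)*10+7)*10+2)*10+8) * (x^+6 * (3 - 2*x)^+2 * (y^+1 * (3 - 2*y)^+3)) + (((((((10*10+4)*10+4)*10+8)*10)*10+3)*10+2)*10+8) * (x^+6 * (3 - 2*x)^+2 * (y^+2 * (3 - 2*y)^+2)) + ((((((((4*10+9)*10)*10+6)*10)*10+2)*10+5)*10+8)*10) * (x^+6 * (3 - 2*x)^+2 * (y^+3 * (3 - 2*y)^+1)) + ((((((((6*10+2)*10)*10)*10+9)*10+5)*10+7)*10)*10) * (x^+6 * (3 - 2*x)^+2 * (y^+4 * (3 - 2*y)^+0)) + ((((13*10+9)*10+5)*10+2)*10) * (x^+7 * (3 - 2*x)^+1 * (y^+0 * (3 - 2*y)^+4)) + ((((((5*10)*10+5)*10+4)*10)*10+8)*10) * (x^+7 * (3 - 2*x)^+1 * (y^+1 * (3 - 2*y)^+3)) + (((((((5*10+1)*10+7)*10+1)*10+4)*10+4)*10+8)*10) * (x^+7 * (3 - 2*x)^+1 * (y^+2 * (3 - 2*y)^+2)) + ((((((((2*10+6)*10+1)*10+7)*10+9)*10+4)*10+8)*10)*10) * (x^+7 * (3 - 2*x)^+1 * (y^+3 * (3 - 2*y)^+1)) + (((((((17*10+7)*10+9)*10+4)*10+7)*10)*10)*10) * (x^+7 * (3 - 2*x)^+1 * (y^+4 * (3 - 2*y)^+0)) +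 ((((2*10+2)*10+4)*10)*10) * (x^+8 * (3 - 2*x)^+0 * (y^+0 * (3 - 2*y)^+4)) + (((((7*10+9)*10+3)*10+6)*10)*10) * (x^+8 * (3 - 2*x)^+0 * (y^+1 * (3 - 2*y)^+3)) + ((((((4*10+7)*10+8)*10+5)*10+6)*10)*10) * (x^+8 * (3 - 2*x)^+0 * (y^+2 * (3 - 2*y)^+2)) + (((((((3*10+5)*10+9)*10+8)*10+6)*10)*10)*10) * (x^+8 * (3 - 2*x)^+0 * (y^+3 * (3 - 2*y)^+1)) + ((((((8*10+8)*10)*10+2)*10+5)*10)*10) * (x^+8 * (3 - 2*x)^+0 * (y^+4 * (3 - 2*y)^+0)) by rewrite /Npoly; ring.
have : 0 <= (((((5*10+3)*10+1)*10+4)*10+4)*10+1) * Npoly x y.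
  rewrite E.
  repeat first [ apply: exprn_ge0; assumption | apply: ler0n | apply: ler01 | apply: addr_ge0 | apply: mulr_ge0 ].
move=> H.
have H2 : 0 < (((((5*10+3)*10+1)*10+4)*10+4)*10+1) :> R by lra.
by rewrite (pmulr_rge0 _ H2) in H.
Qed.

Lemma Kid (x y : R) : 0 < x -> x < 3/2 -> 0 < y ->
  let a := d0 x y in let b := d1 x y in let c := d2 x y in
  a - 4/5 - 5*x*c^+2/4 - 5*x*(b + 3/5 + 3*c/2)^+2/(7-4*x) - 1/10
  = Npoly x y / (20 * ((1+x)*(1+y+x*y)*(1+y))^+2 * (7-4*x)).
Proof.
move=> x0 x1 y0 a b c.
have h1 : 1 + x != 0 by apply/eqP; lra.
have h2 : 1 + y + x*y != 0 by apply/eqP; nra.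
have h3 : 1 + y != 0 by apply/eqP; lra.
have h4 : 7 - 4*x != 0 by apply/eqP; lra.
rewrite /a /b /c /d0 /d1 /d2 /Npoly.
field.
by rewrite h1 h2 h3 h4.
Qed.

Lemma Kge (x y : R) : 0 < x -> x < 3/2 -> 0 < y -> y < 3/2 ->
  1/10 <= d0 x y - 4/5 - 5*x*(d2 x y)^+2/4 - 5*x*(d1 x y + 3/5 + 3*(d2 x y)/2)^+2/(7-4*x).
Proof.
move=> x0 x1 y0 y1.
rewrite -subr_ge0 (@Kid x y x0 x1 y0).
apply: divr_ge0; first by apply: Npos; lra.
apply: mulr_ge0; last lra.
apply: mulr_ge0; first lra.
exact: sqr_ge0.
Qed.

Lemma local (x y p q s : R) : 0 < x -> x < 3/2 -> 0 < y -> y < 3/2 ->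
  p^+2/10 <= p * (d0 x y * p + d1 x y * q + d2 x y * s) - (4 * p^+2 - 3 * p * q + q^+2)/5
            + (4 * q^+2 - 3 * q * s + s^+2)/(5 * x).
Proof.
move=> x0 x1 y0 y1.
have hK : 1/10 <= d0 x y - 4/5 - 5 * x * (d2 x y)^+2/4 - 5 * x * (d1 x y + 3/5 + 3 * (d2 x y)/2)^+2/(7-4 * x).
  exact: (@Kge x y x0 x1 y0 y1).
move: (d0 x y) (d1 x y) (d2 x y) hK => a b c hK.
set C := 7/20 - x/5.
have hC : 0 < C by rewrite /C; lra.
set B := b + 3/5 + 3 * c/2.
set K := a - 4/5 - 5 * x * c^+2/4 - 5 * x * B^+2/(7-4 * x).
have E : p * (a * p + b * q + c * s) - (4 * p^+2 - 3 * p * q + q^+2)/5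
            + (4 * q^+2 - 3 * q * s + s^+2)/(5 * x) - p^+2/10
    = ((1/5) * (s + 5 * (x * c * p - 3 * q/5)/2)^+2 + C * (q + x * B * p/(2 * C))^+2)/x + (K - 1/10) * p^+2.
  rewrite /K /B /C. field.
  apply/and3P; split; apply/eqP; lra.
rewrite -subr_ge0 E.
apply: addr_ge0; last by apply: mulr_ge0; [rewrite subr_ge0 | exact: sqr_ge0].
apply: divr_ge0; last lra.
apply: addr_ge0; apply: mulr_ge0; try exact: sqr_ge0; lra.
Qed.
End Loc.


Section Main.
Variable R : realType.
Variable tau : nat -> R.

Lemma size_thseq k m : size (thseq tau k m) = m.+1.
Proof. by elim: m => [|m IH] //=; rewrite size_rcons IH. Qed.

Lemma nth_thseq k m i : (i <= m)%N -> nth 0 (thseq tau k m) i = theta tau k i.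
Proof.
elim: m => [|m IH] hi.
  by move: hi; rewrite leqn0 => /eqP ->.
rewrite leq_eqVlt in hi; case/orP: hi => [/eqP -> //|hi].
by rewrite /= nth_rcons size_thseq hi IH.
Qed.

Lemma TD k j : (j <= k)%N -> dker tau j 0 != 0 ->
  \sum_(j <= i < k.+1) theta tau k (k - i) * dker tau i (i - j) = (k == j)%:R.
Proof.
move=> hjk hd.
case/boolP: (k == j) => [/eqP ->|hkj].
  by rewrite big_nat1 subnn /theta /= mul1r mulVf.
have hlt : (j < k)%N by rewrite ltn_neqAle eq_sym hkj hjk.
have [m hm] : exists m, (k - j = m.+1)%N by exists (k - j).-1; rewrite prednK // subn_gt0.
have ej : (k - m.+1 = j)%N by rewrite -hm subKn.
rewrite big_ltn // subnn hm /theta /= nth_rcons size_thseq ltnn eqxx ej.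
set S := \sum_(j.+1 <= i < k.+1) _.
have -> : \sum_(j.+1 <= i < k.+1) theta tau k (k - i) * dker tau i (i - j) = S.
  apply: eq_big_nat => i /andP [h1 h2].
  rewrite nth_thseq //.
  rewrite -ltnS -hm; apply: ltn_sub2l => //.
move: hd; rewrite /dker => hd.
by field.
Qed.

Definition thm k i := if (i <= k)%N then theta tau k (k - i) else 0.
Definition ddm i j := if (j <= i)%N then dker tau i (i - j) else 0.

Lemma TDfull n k j : (3 <= j)%N -> (k <= n)%N -> (j <= n)%N ->
  (forall i, (3 <= i)%N -> dker tau i 0 != 0) ->
  \sum_(3 <= i < n.+1) thm k i * ddm i j = (k == j)%:R.
Proof.
move=> hj hk hjn hd.
case: (leqP j k) => hjk.
  rewrite (@big_cat_nat _ _ _ j) //=; try lia.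
  rewrite (@big_cat_nat _ _ _ k.+1 j) //=; try lia.
  have Z1 : \sum_(3 <= i < j) thm k i * ddm i j = 0.
    by rewrite big_nat_cond big1 // => i /andP[/andP[_ hi] _]; rewrite /ddm leqNgt hi mulr0.
  have Z3 : \sum_(k.+1 <= i < n.+1) thm k i * ddm i j = 0.
    by rewrite big_nat_cond big1 // => i /andP[/andP[hi _] _]; rewrite /thm leqNgt hi mul0r.
  rewrite Z1 Z3 add0r addr0.
  rewrite -(@TD k j hjk (hd j hj)); apply: eq_big_nat => i /andP[h1 h2].
  by rewrite /thm /ddm -ltnS h2 h1.
rewrite big1 ?ltn_eqF //.
move=> i _; rewrite /thm /ddm.
case: (leqP i k) => hik; last by rewrite mul0r.
have : (i < j)%N by apply: leq_ltn_trans hjk.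
by rewrite ltnNge => /negbTE ->; rewrite mulr0.
Qed.

Lemma DTfull n k j : (3 <= n)%N -> (3 <= k <= n)%N -> (3 <= j <= n)%N ->
  (forall i, (3 <= i)%N -> dker tau i 0 != 0) ->
  \sum_(3 <= i < n.+1) ddm k i * thm i j = (k == j)%:R.
Proof.
move=> hn /andP[hk1 hk2] /andP[hj1 hj2] hd.
pose N := (n - 2)%N.
have hN : (N + 3 = n.+1)%N by rewrite /N; lia.
have shift : forall F : nat -> R, \sum_(b < N) F (b + 3)%N = \sum_(3 <= i < n.+1) F i.
  by move=> F; rewrite -hN (big_addn 0 _ 3) addnK big_mkord.
pose A : 'M[R]_N := \matrix_(a, b) thm (a + 3) (b + 3).
pose B : 'M[R]_N := \matrix_(a, b) ddm (a + 3) (b + 3).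
have AB : A *m B = 1%:M.
  apply/matrixP => a c; rewrite !mxE.
  under eq_bigr do rewrite !mxE.
  have ha := ltn_ord a; have hc := ltn_ord c.
  rewrite (shift (fun i => thm (a+3) i * ddm i (c+3))) TDfull //; try lia.
  by rewrite eqn_add2r.
have BA := mulmx1C AB.
have ha : (k - 3 < N)%N by rewrite /N; lia.
have hc : (j - 3 < N)%N by rewrite /N; lia.
have := congr1 (fun M : 'M[R]_N => M (Ordinal ha) (Ordinal hc)) BA; rewrite !mxE /=.
under eq_bigr do rewrite !mxE.
rewrite (shift (fun i => ddm (k - 3 + 3) i * thm i (j - 3 + 3))) !subnK // => ->.
rewrite -val_eqE /=; congr (_%:R); apply/eqP/eqP; lia.
Qed.
End Main.


Section Fin.
Variable R : realType.

Lemma d0_pos (x y : R) : 0 < x -> 0 < y -> 0 < d0 x y.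
Proof.
move=> hx hy; rewrite /d0; apply: addr_gt0; apply: divr_gt0; try nra.
Qed.

Lemma Re_lt (Re : R) : 0 < Re -> Re_eq Re = 0 -> Re < 3/2.
Proof.
move=> h0 h; rewrite ltNge; apply/negP => hge.
move: h; rewrite /Re_eq.
have hs0 : 0 <= Num.sqrt Re := sqrtr_ge0 _.
have hs2 : (Num.sqrt Re)^+2 = Re := sqr_sqrtr (ltW h0).
move: hs0 hs2; set s := Num.sqrt Re => hs0 hs2.
have hs : 61/50 <= s by nra.
have hD : Re^+2 + Re + 1 != 0 by apply/lt0r_neq0; nra.
have h1 : 7 * (Re + 1) != 0 by apply/lt0r_neq0; nra.
move=> /eqP; rewrite subr_eq0 eqr_div // => /eqP E.
have t0 : 0 <= Re - 3/2 by lra.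
have t1 : 0 <= (Re - 3/2) * (Re - 3/2) by nra.
have t2 : 0 <= (Re - 3/2) * (Re - 3/2) * (Re - 3/2) by nra.
have t3 : 0 <= Re^+2 * (Re + 1) * (s - 61/50).
  apply: mulr_ge0; last lra. apply: mulr_ge0; nra.
nra.
Qed.

Lemma step (t x y p q s X : R) : 0 < t -> 0 < x -> x < 3/2 -> 0 < y -> y < 3/2 ->
  X = d0 x y * p + d1 x y * q + d2 x y * s ->
  t * p^+2 / 10 <= X * (t * p) - (t * (4 * p^+2 - 3 * p * q + q^+2) / 5
                                 - (t / x) * (4 * q^+2 - 3 * q * s + s^+2) / 5).
Proof.
move=> ht hx0 hx1 hy0 hy1 ->.
have L := @local R x y p q s hx0 hx1 hy0 hy1.
rewrite -subr_ge0.
have hx : x != 0 by apply/lt0r_neq0.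
have -> : (d0 x y * p + d1 x y * q + d2 x y * s) * (t * p) -
    (t * (4 * p ^+ 2 - 3 * p * q + q ^+ 2) / 5 - t / x * (4 * q ^+ 2 - 3 * q * s + s ^+ 2) / 5) -
    t * p ^+ 2 / 10
  = t * ((p * (d0 x y * p + d1 x y * q + d2 x y * s) - (4 * p^+2 - 3 * p * q + q^+2)/5
            + (4 * q^+2 - 3 * q * s + s^+2)/(5 * x)) - p^+2/10).
  by field.
apply: mulr_ge0; first lra.
by rewrite subr_ge0.
Qed.
End Fin.


Ltac nlia := match goal with |- is_true (leq _ _) => lia end.

Theorem lemma4p1 (R : realType) (Re : R)
  (hRe_pos : 0 < Re) (hRe_root : Re_eq Re = 0)
  (hRe_uniq : forall x : R, 0 < x -> Re_eq x = 0 -> x = Re)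
  (tau : nat -> R)
  (htau : forall k : nat, (1 <= k)%N -> 0 < tau k)
  (hr : forall k : nat, (2 <= k)%N -> 0 < @stepratio R tau k < Re)
  (n : nat) (hn : (3 <= n)%N) (xi : nat -> R)
  (hxi : exists k : nat, [/\ (3 <= k)%N, (k <= n)%N & xi k != 0]) :
  0 < 2 * \sum_(3 <= k < n.+1)
            xi k * \sum_(3 <= j < k.+1) tau k * @theta R tau k (k - j) * xi j.
Proof.
have hRe := @Re_lt R Re hRe_pos hRe_root.
have hrk : forall k, (2 <= k)%N -> 0 < stepratio tau k /\ stepratio tau k < 3/2.
  move=> k hk; have /andP[a b] := hr k hk; split => //; lra.
have hd : forall i, (3 <= i)%N -> dker tau i 0 != 0.
  move=> i hi; rewrite /dker; apply/lt0r_neq0.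
  have [a _] := hrk i (ltnW hi).
  have [b _] : 0 < stepratio tau i.-1 /\ stepratio tau i.-1 < 3/2 by apply: hrk; lia.
  exact: d0_pos.
pose eta k := \sum_(3 <= j < n.+1) @thm R tau k j * xi j.
have eta_lt3 : forall k, (k < 3)%N -> eta k = 0.
  move=> k hk; rewrite /eta big_nat_cond big1 // => j /andP[/andP[hj _] _].
  rewrite /thm; have -> : (j <= k)%N = false by lia.
  by rewrite mul0r.
have eta_eq : forall k, (3 <= k <= n)%N ->
    \sum_(3 <= j < k.+1) tau k * theta tau k (k - j) * xi j = tau k * eta k.
  move=> k /andP[hk1 hk2]; rewrite /eta mulr_sumr.
  rewrite [RHS](@big_cat_nat _ _ _ k.+1) //=; try nlia.
  have -> : \sum_(k.+1 <= i < n.+1) tau k * (@thm R tau k i * xi i) = 0.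
    rewrite big_nat_cond big1 // => j /andP[/andP[hj _] _].
    rewrite /thm; have -> : (j <= k)%N = false by lia.
    by rewrite mul0r mulr0.
  rewrite addr0; apply: eq_big_nat => j /andP[hj1 hj2].
  rewrite /thm; have -> : (j <= k)%N = true by lia.
  by rewrite mulrA.
have Xk : forall k, (3 <= k <= n)%N -> xi k = \sum_(3 <= i < n.+1) @ddm R tau k i * eta i.
  move=> k hk.
  rewrite /eta.
  under eq_bigr do rewrite mulr_sumr.
  rewrite exchange_big /=.
  transitivity (\sum_(3 <= j < n.+1) (k == j)%:R * xi j).
    rewrite (bigD1_seq k) /= ?mem_index_iota ?iota_uniq //.
    rewrite eqxx mul1r big1 ?addr0 // => j hj.
    by rewrite eq_sym (negbTE hj) mul0r.
  apply: eq_big_nat => j hj.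
  rewrite -(@DTfull R tau n k j hn hk _ hd); last by lia.
  rewrite mulr_suml; apply: eq_bigr => i _; by rewrite mulrA.
have Yk : forall k, (3 <= k <= n)%N -> \sum_(3 <= i < n.+1) @ddm R tau k i * eta i
    = dker tau k 0 * eta k + dker tau k 1 * eta k.-1 + dker tau k 2 * eta k.-2.
  move=> k /andP[hk1 hk2].
  have -> : \sum_(3 <= i < n.+1) @ddm R tau k i * eta i = \sum_(0 <= i < n.+1) @ddm R tau k i * eta i.
    rewrite [RHS](@big_cat_nat _ _ _ 3) //=; try nlia.
    have -> : \sum_(0 <= i < 3) @ddm R tau k i * eta i = 0.
      by rewrite big_nat_cond big1 // => i /andP[/andP[_ hi] _]; rewrite eta_lt3 // mulr0.
    by rewrite add0r.
  have [m hm] : exists m, k = m.+2 by exists k.-2; lia.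
  rewrite (@big_cat_nat _ _ _ m) //=; try nlia.
  rewrite (@big_cat_nat _ _ _ m.+3 m) //=; try nlia.
  have -> : \sum_(0 <= i < m) @ddm R tau k i * eta i = 0.
    rewrite big_nat_cond big1 // => i /andP[/andP[_ hi] _].
    rewrite /ddm; have -> : (i <= k)%N = true by lia.
    have [t ->] : exists t, (k - i = t.+3)%N by exists (k - i - 3)%N; lia.
    by rewrite mul0r.
  have -> : \sum_(m.+3 <= i < n.+1) @ddm R tau k i * eta i = 0.
    rewrite big_nat_cond big1 // => i /andP[/andP[hi _] _].
    rewrite /ddm; have -> : (i <= k)%N = false by lia.
    by rewrite mul0r.
  rewrite add0r addr0 big_ltn; last by lia.
  rewrite big_ltn; last by lia.
  rewrite big_ltn; last by lia.
  rewrite big_geq // /ddm hm.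
  have -> : (m <= m.+2)%N = true by lia.
  have -> : (m.+1 <= m.+2)%N = true by lia.
  have -> : (m.+2 <= m.+2)%N = true by lia.
  have -> : (m.+2 - m = 2)%N by lia.
  have -> : (m.+2 - m.+1 = 1)%N by lia.
  rewrite subnn /=.
  ring.

pose P k := tau k * (4 * eta k ^+ 2 - 3 * eta k * eta k.-1 + eta k.-1 ^+ 2) / 5.
have hstep : forall k, (3 <= k <= n)%N ->
    tau k * eta k ^+ 2 / 10 <= xi k * (tau k * eta k) - (P k - P k.-1).
  move=> k hk; have /andP[hk1 hk2] := hk.
  have [hx0 hx1] := hrk k (ltnW hk1).
  have [hy0 hy1] : 0 < stepratio tau k.-1 /\ stepratio tau k.-1 < 3/2 by apply: hrk; lia.
  have htk : 0 < tau k by apply: htau; lia.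
  have htk1 : 0 < tau k.-1 by apply: htau; lia.
  have ht : tau k.-1 = tau k / stepratio tau k.
    rewrite /stepratio; field; apply/andP; split; apply/lt0r_neq0 => //.
  rewrite /P ht.
  apply: (@step R _ _ (stepratio tau k.-1)) => //.
  by rewrite (Xk k hk) (Yk k hk) /dker.
have tele : \sum_(3 <= k < n.+1) (P k - P k.-1) = P n - P 2.
  rewrite (big_add1 _ _ 2) /=.
  by rewrite telescope_sumr //; lia.
have P2 : P 2 = 0 by rewrite /P !eta_lt3 //; ring.
have Pn : 0 <= P n.
  rewrite /P; apply: divr_ge0; last lra.
  apply: mulr_ge0; first by apply/ltW/htau; lia.
  have := sqr_ge0 (eta n.-1 - 3/2 * eta n); have := sqr_ge0 (eta n); nra.
set S := \sum_(3 <= k < n.+1) tau k * eta k ^+ 2 / 10.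
have hS : 0 < S.
  have S0 : 0 <= S.
    rewrite /S big_nat_cond; apply: sumr_ge0 => k /andP[/andP[hk _] _]; apply: divr_ge0; last lra.
    apply: mulr_ge0; last exact: sqr_ge0.
    by apply/ltW/htau; lia.
  rewrite lt_def S0 andbT.
  apply/negP => /eqP HS.
  move: HS; rewrite /S big_nat_cond => /eqP; rewrite psumr_eq0; last first.
    move=> k /andP[/andP[hk _] _]; apply: divr_ge0; last lra.
    apply: mulr_ge0; last exact: sqr_ge0.
    by apply/ltW/htau; lia.
  move/allP => Hall.
  have eta0 : forall i, (3 <= i <= n)%N -> eta i = 0.
    move=> i hi.
    have hii : i \in index_iota 3 n.+1 by rewrite mem_index_iota ltnS.
    have := Hall i hii; rewrite ltnS hi /= => /eqP.
    have hti : 0 < tau i by apply: htau; lia.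
    move=> /eqP; rewrite mulf_eq0 invr_eq0 => /orP[]; last by move=> /eqP; lra.
    rewrite mulf_eq0 => /orP[|]; last by rewrite sqrf_eq0 => /eqP.
    move=> /eqP; lra.
  case: hxi => k0 [hk01 hk02 hk03].
  move/negP: hk03; apply.
  rewrite (Xk k0); last by lia.
  apply/eqP; rewrite big_nat_cond big1 // => i /andP[hi _].
  by rewrite eta0 ?mulr0 //; lia.
have main : S <= \sum_(3 <= k < n.+1) xi k * (tau k * eta k).
  have := @ler_sum_nat _ 3 n.+1 _ _ hstep.
  rewrite sumrB tele P2 subr0 => H.
  apply: (le_trans H); lra.
have -> : \sum_(3 <= k < n.+1) xi k * \sum_(3 <= j < k.+1) tau k * theta tau k (k - j) * xi j
   = \sum_(3 <= k < n.+1) xi k * (tau k * eta k).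
  apply: eq_big_nat => k hk; congr (_ * _); apply: eta_eq; lia.
apply: mulr_gt0; first lra.
exact: lt_le_trans hS main.
Qed.
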